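(* Let $a,b,c,k,m>0$ and consider the system $$\frac{dx}{dt}=bx(1-x-cy),\qquad \frac{dy}{dt}=y\Big(\frac{1}{1+kx}-y-ax-mxy\Big).$$ Define $k^*=\frac1a-1$, $m_1=1-ac-k$, $m_2=\frac{2ack+ac-k-1}{1+k}$, the cubic $u(x)=A_1x^3+A_2x^2+A_3x+A_4$ with $A_1=km$, $A_2=(-ac-m+1)k+m$, $A_3=-ac-k-m+1$, $A_4=c-1$, and (when the discriminant $\Delta=4A_2^2-12A_1A_3$ of $u'$ is positive) let $x_{v2}$ denote the larger real root of $u'(x)=3A_1x^2+2A_2x+A_3$. A positive equilibrium is an equilibrium $(x,y)$ with $x>0,y>0$. Then: (1) If $m=m_1$, $0<c<1$ and $0<k<k^*$, the system has a unique positive equilibrium. (2) Suppose $m>m_1$. (a) Suppose $c>1$ (and $\Delta>0$). (i) If $u(x_{v2})=0$ and $m>m_2$, the system has a unique positive equilibrium. (ii) If $u(x_{v2})<0$: if $m>m_2$ and $k\ge k^*$, the system has a unique positive equilibrium; if $m>m_2$ and $0<k<k^*$, the system has two positive equilibria; if $m=m_2$, the system has a unique positive equilibrium; if $0<m<m_2$ and $k>k^*$, the system has a unique positive equilibrium. (b) If $0<c\le 1$ and $0<k<k^*$, the system has a unique positive equilibrium. (3) If $0<m<m_1$, $0<c<1$ and $0<k<k^*$, the system has a unique positive equilibrium.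
   Context: All parameters are positive. Positive equilibria have the form $(x,(1-x)/c)$ where $x\in(0,1)$ is a root of $u$. *)

(* Defs.v *)
From Stdlib Require Import Reals Lra.
Open Scope R_scope.

Definition fX (b c x y : R) : R := b * x * (1 - x - c * y).
Definition fY (a k m x y : R) : R := y * (1 / (1 + k * x) - y - a * x - m * x * y).

Definition pos_equilibrium (a b c k m x y : R) : Prop :=
  0 < x /\ 0 < y /\ fX b c x y = 0 /\ fY a k m x y = 0.

Definition unique_pos_eq (a b c k m : R) : Prop :=
  exists x0 y0, pos_equilibrium a b c k m x0 y0 /\
    forall x y, pos_equilibrium a b c k m x y -> x = x0 /\ y = y0.

Definition two_pos_eq (a b c k m : R) : Prop :=
  exists x1 y1 x2 y2, (x1, y1) <> (x2, y2) /\
    pos_equilibrium a b c k m x1 y1 /\ pos_equilibrium a b c k m x2 y2 /\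
    forall x y, pos_equilibrium a b c k m x y ->
      (x = x1 /\ y = y1) \/ (x = x2 /\ y = y2).

Definition kstar (a : R) : R := 1 / a - 1.
Definition mm1 (a c k : R) : R := 1 - a * c - k.
Definition mm2 (a c k : R) : R := (2 * a * c * k + a * c - k - 1) / (1 + k).

Definition AA1 (k m : R) : R := k * m.
Definition AA2 (a c k m : R) : R := (- a * c - m + 1) * k + m.
Definition AA3 (a c k m : R) : R := - a * c - k - m + 1.
Definition AA4 (c : R) : R := c - 1.

Definition ucub (a c k m x : R) : R :=
  AA1 k m * x ^ 3 + AA2 a c k m * x ^ 2 + AA3 a c k m * x + AA4 c.

Definition Delta_u (a c k m : R) : R :=
  4 * (AA2 a c k m) ^ 2 - 12 * AA1 k m * AA3 a c k m.

(* larger real root of u' (AA1 = k m > 0 under the standing assumptions) *)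
Definition x_v2 (a c k m : R) : R :=
  (- 2 * AA2 a c k m + sqrt (Delta_u a c k m)) / (6 * AA1 k m).

(* Main.v *)
Require Import Defs.
From Stdlib Require Import Reals.
From Stdlib Require Import Lra Psatz.
Open Scope R_scope.

Definition du (a c k m z : R) : R :=
  3 * AA1 k m * z ^ 2 + 2 * AA2 a c k m * z + AA3 a c k m.

Lemma simpson a c k m x y :
  ucub a c k m y - ucub a c k m x =
  (y - x) * (du a c k m x + 4 * du a c k m ((x + y) / 2) + du a c k m y) / 6.
Proof. unfold ucub, du. field. Qed.

Lemma incr_l a c k m x y : x < y -> 0 <= du a c k m x ->
  0 <= du a c k m ((x + y) / 2) -> 0 < du a c k m y -> ucub a c k m x < ucub a c k m y.
Proof.
  intros. pose proof (simpson a c k m x y).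
  assert (0 < (y - x) * (du a c k m x + 4 * du a c k m ((x + y) / 2) + du a c k m y)).
  { apply Rmult_lt_0_compat; lra. }
  lra.
Qed.

Lemma decr_l a c k m x y : x < y -> du a c k m x < 0 ->
  du a c k m ((x + y) / 2) <= 0 -> du a c k m y <= 0 -> ucub a c k m y < ucub a c k m x.
Proof.
  intros. pose proof (simpson a c k m x y).
  assert (0 < (y - x) * -(du a c k m x + 4 * du a c k m ((x + y) / 2) + du a c k m y)).
  { apply Rmult_lt_0_compat; lra. }
  lra.
Qed.

Lemma ucub_cont a c k m : continuity (fun x => ucub a c k m x).
Proof. unfold ucub. reg. Qed.

Lemma ivt_up a c k m p q : p < q -> ucub a c k m p < 0 -> 0 < ucub a c k m q ->
  exists z, p < z < q /\ ucub a c k m z = 0.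
Proof.
  intros Hpq H1 H2. destruct (IVT _ p q (ucub_cont a c k m) Hpq H1 H2) as [z [[? ?] Hz]].
  exists z. split; [split|exact Hz].
  - destruct H; [auto| subst; lra].
  - destruct H0; [auto| subst; lra].
Qed.

Lemma ivt_down a c k m p q : p < q -> 0 < ucub a c k m p -> ucub a c k m q < 0 ->
  exists z, p < z < q /\ ucub a c k m z = 0.
Proof.
  intros Hpq H1 H2.
  assert (Hc : continuity (fun x => - ucub a c k m x)).
  { apply continuity_opp, ucub_cont. }
  destruct (IVT _ p q Hc Hpq) as [z [[? ?] Hz]]; try lra.
  exists z. split; [split|lra].
  - destruct H; [auto| subst; lra].
  - destruct H0; [auto| subst; lra].
Qed.

Lemma equil_iff a b c k m x y : 0 < b -> 0 < c -> 0 < k ->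
  pos_equilibrium a b c k m x y <->
  (0 < x /\ x < 1 /\ y = (1 - x) / c /\ ucub a c k m x = 0).
Proof.
  intros hb hc hk. unfold pos_equilibrium, fX, fY. split.
  - intros [hx [hy [h1 h2]]].
    assert (e1 : 1 - x - c * y = 0).
    { destruct (Rmult_integral _ _ h1) as [h|h]; auto.
      destruct (Rmult_integral _ _ h); lra. }
    assert (hyv : y = (1 - x) / c) by (replace (1 - x) with (c * y) by lra; field; lra).
    assert (hx1 : x < 1) by nra.
    assert (e2 : 1 / (1 + k * x) - y - a * x - m * x * y = 0).
    { destruct (Rmult_integral _ _ h2) as [h|h]; lra. }
    repeat split; auto.
    assert (hpos : 0 < 1 + k * x) by nra.
    assert (ucub a c k m x = c * (1 + k * x) * (1 / (1 + k * x) - y - a * x - m * x * y)).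
    { rewrite hyv. unfold ucub, AA1, AA2, AA3, AA4. field. lra. }
    rewrite H, e2. ring.
  - intros [hx [hx1 [hyv hu]]].
    assert (hy : 0 < y) by (rewrite hyv; apply Rdiv_lt_0_compat; lra).
    repeat split; auto.
    + rewrite hyv. replace (1 - x - c * ((1 - x) / c)) with 0 by (field; lra). ring.
    + assert (hpos : 0 < 1 + k * x) by nra.
      assert (E : ucub a c k m x = c * (1 + k * x) * (1 / (1 + k * x) - y - a * x - m * x * y)).
      { rewrite hyv. unfold ucub, AA1, AA2, AA3, AA4. field. lra. }
      rewrite hu in E.
      assert (1 / (1 + k * x) - y - a * x - m * x * y = 0).
      { destruct (Rmult_integral _ _ (eq_sym E)) as [h|h]; auto.
        destruct (Rmult_integral _ _ h); lra. }
      rewrite H; ring.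
Qed.

Lemma to_unique a b c k m : 0 < b -> 0 < c -> 0 < k ->
  (exists x0, 0 < x0 < 1 /\ ucub a c k m x0 = 0 /\
     forall x, 0 < x < 1 -> ucub a c k m x = 0 -> x = x0) ->
  unique_pos_eq a b c k m.
Proof.
  intros hb hc hk [x0 [hx0 [hu H]]].
  exists x0, ((1 - x0) / c). split.
  - apply equil_iff; auto. repeat split; lra.
  - intros x y Hp. apply equil_iff in Hp; auto.
    destruct Hp as [? [? [? ?]]].
    assert (x = x0) by (apply H; auto). subst. auto.
Qed.

Lemma to_two a b c k m : 0 < b -> 0 < c -> 0 < k ->
  (exists x1 x2, 0 < x1 < 1 /\ 0 < x2 < 1 /\ x1 < x2 /\
     ucub a c k m x1 = 0 /\ ucub a c k m x2 = 0 /\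
     forall x, 0 < x < 1 -> ucub a c k m x = 0 -> x = x1 \/ x = x2) ->
  two_pos_eq a b c k m.
Proof.
  intros hb hc hk [x1 [x2 [h1 [h2 [h12 [u1 [u2 H]]]]]]].
  exists x1, ((1 - x1) / c), x2, ((1 - x2) / c). split; [|split; [|split]].
  - intro E. inversion E. lra.
  - apply equil_iff; auto. repeat split; lra.
  - apply equil_iff; auto. repeat split; lra.
  - intros x y Hp. apply equil_iff in Hp; auto.
    destruct Hp as [? [? [? ?]]].
    destruct (H x) as [E|E]; auto; subst x; [left|right]; auto.
Qed.

Lemma u0 a c k m : ucub a c k m 0 = c - 1.
Proof. unfold ucub, AA4. ring. Qed.

Lemma u1 a c k m : ucub a c k m 1 = c * (1 - a * (1 + k)).
Proof. unfold ucub, AA1, AA2, AA3, AA4. ring. Qed.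

Lemma du1 a c k m : 0 < k -> du a c k m 1 = (1 + k) * (m - mm2 a c k).
Proof. intros. unfold du, mm2, AA1, AA2, AA3. field. lra. Qed.

(* case m <= m1 : u strictly increasing on [0, oo) *)
Lemma case_le a b c k m : 0 < a -> 0 < b -> 0 < c -> 0 < k -> 0 < m ->
  m <= mm1 a c k -> c < 1 -> k < kstar a -> unique_pos_eq a b c k m.
Proof.
  intros ha hb hc hk hm hm1 hc1 hks.
  assert (hA3 : 0 <= AA3 a c k m) by (unfold AA3, mm1 in *; lra).
  assert (hA2 : 0 < AA2 a c k m) by (unfold AA2, mm1 in *; nra).
  assert (hA1 : 0 < AA1 k m) by (unfold AA1; nra).
  assert (dpos : forall z, 0 < z -> 0 < du a c k m z).
  { intros z hz. unfold du. nra. }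
  assert (dnn : forall z, 0 <= z -> 0 <= du a c k m z).
  { intros z hz. unfold du. nra. }
  assert (inc : forall x y, 0 <= x -> x < y -> ucub a c k m x < ucub a c k m y).
  { intros. apply incr_l; auto; [apply dnn; lra| apply dpos; lra]. }
  assert (hak : a * (1 + k) < 1).
  { unfold kstar in hks. apply Rmult_lt_reg_l with (/ a).
    apply Rinv_0_lt_compat; auto. field_simplify; lra. }
  apply to_unique; auto.
  destruct (ivt_up a c k m 0 1) as [z [hz hzu]]; try lra.
  - rewrite u0; lra.
  - rewrite u1; nra.
  - exists z. repeat split; try lra; auto.
    intros x hx hxu. destruct (Rtotal_order x z) as [h|[h|h]]; auto.
    + pose proof (inc x z ltac:(lra) h). lra.
    + pose proof (inc z x ltac:(lra) h). lra.
Qed.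


Lemma shape a c k m : 0 < k -> 0 < m -> m > mm1 a c k ->
  0 < x_v2 a c k m /\
  (forall z, 0 <= z -> z < x_v2 a c k m -> du a c k m z < 0) /\
  (forall z, 0 <= z -> z <= x_v2 a c k m -> du a c k m z <= 0) /\
  (forall z, x_v2 a c k m <= z -> 0 <= du a c k m z) /\
  (forall z, x_v2 a c k m < z -> 0 < du a c k m z).
Proof.
  intros hk hm hm1.
  assert (hA3 : AA3 a c k m < 0) by (unfold AA3, mm1 in *; lra).
  assert (hA1 : 0 < AA1 k m) by (unfold AA1; nra).
  set (A1 := AA1 k m) in *. set (A2 := AA2 a c k m) in *. set (A3 := AA3 a c k m) in *.
  assert (hD : 0 < Delta_u a c k m) by (unfold Delta_u; fold A1 A2 A3; nra).
  set (D := Delta_u a c k m) in *.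
  assert (hs : sqrt D * sqrt D = D) by (apply sqrt_sqrt; lra).
  assert (hsp : 0 < sqrt D) by (apply sqrt_lt_R0; lra).
  set (s := sqrt D) in *.
  assert (hDe : D = 4 * A2 ^ 2 - 12 * A1 * A3) by reflexivity.
  assert (hs2 : 2 * A2 < s) by nra.
  assert (hs3 : - 2 * A2 < s) by nra.
  set (r := x_v2 a c k m).
  assert (hr : r = (- 2 * A2 + s) / (6 * A1)) by reflexivity.
  set (r' := (- 2 * A2 - s) / (6 * A1)).
  assert (hrp : 0 < r) by (rewrite hr; apply Rdiv_lt_0_compat; lra).
  assert (hr'n : r' < 0) by (unfold r'; apply Rdiv_neg_pos; lra) .
  assert (fac : forall z, du a c k m z = 3 * A1 * (z - r) * (z - r')).
  { intros z. unfold du. fold A1 A2 A3. rewrite hr. unfold r'.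
    field_simplify; [|lra]. replace (s ^ 2) with (4 * A2 ^ 2 - 12 * A1 * A3) by (rewrite <- hDe, <- hs; ring). field. lra. }
  repeat split; auto; intros z; rewrite fac; intros.
  - assert (0 < z - r') by lra. assert (z - r < 0) by lra. assert (0 < 3 * A1 * (z - r')) by nra. nra.
  - assert (0 < z - r') by lra. assert (z - r <= 0) by lra. assert (0 < 3 * A1 * (z - r')) by nra. nra.
  - assert (0 < z - r') by lra. assert (0 <= z - r) by lra. assert (0 < 3 * A1 * (z - r')) by nra. nra.
  - assert (0 < z - r') by lra. assert (0 < z - r) by lra. assert (0 < 3 * A1 * (z - r')) by nra. nra.
Qed.


Lemma mono a c k m : 0 < k -> 0 < m -> m > mm1 a c k ->
  0 < x_v2 a c k m /\
  (forall x y, 0 <= x -> x < y -> y <= x_v2 a c k m -> ucub a c k m y < ucub a c k m x) /\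
  (forall x y, x_v2 a c k m <= x -> x < y -> ucub a c k m x < ucub a c k m y) /\
  (m > mm2 a c k -> x_v2 a c k m < 1) /\
  (m = mm2 a c k -> x_v2 a c k m = 1) /\
  (m < mm2 a c k -> 1 < x_v2 a c k m).
Proof.
  intros hk hm hm1.
  destruct (shape a c k m hk hm hm1) as [hr [d1 [d2 [d3 d4]]]].
  pose proof (du1 a c k m hk) as D1.
  set (r := x_v2 a c k m) in *.
  split; [auto|split; [|split; [|split; [|split]]]].
  - intros x y hx hxy hy. apply decr_l; auto.
    + apply d1; lra.
    + apply d2; lra.
    + apply d2; lra.
  - intros x y hx hxy. apply incr_l; [lra| apply d3; lra | apply d3; lra | apply d4; lra].
  - intros h. destruct (Rlt_or_le r 1) as [|h1]; auto.
    pose proof (d2 1 ltac:(lra) h1). nra.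
  - intros h. destruct (Rtotal_order r 1) as [h1|[h1|h1]]; auto.
    + pose proof (d4 1 h1). nra.
    + pose proof (d1 1 ltac:(lra) h1). nra.
  - intros h. destruct (Rlt_or_le 1 r) as [|h1]; auto.
    pose proof (d3 1 h1). nra.
Qed.

Theorem theorem5 (a b c k m : R) (ha : 0 < a) (hb : 0 < b) (hc : 0 < c)
  (hk : 0 < k) (hm : 0 < m) :
  (* (1) *)
  (m = mm1 a c k -> 0 < c < 1 -> 0 < k < kstar a -> unique_pos_eq a b c k m) /\
  (* (2) *)
  (m > mm1 a c k ->
     (* (a) *)
     (c > 1 -> Delta_u a c k m > 0 ->
        (* (i) *)
        (ucub a c k m (x_v2 a c k m) = 0 -> m > mm2 a c k -> unique_pos_eq a b c k m) /\
        (* (ii) *)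
        (ucub a c k m (x_v2 a c k m) < 0 ->
           (m > mm2 a c k -> k >= kstar a -> unique_pos_eq a b c k m) /\
           (m > mm2 a c k -> 0 < k < kstar a -> two_pos_eq a b c k m) /\
           (m = mm2 a c k -> unique_pos_eq a b c k m) /\
           (0 < m < mm2 a c k -> k > kstar a -> unique_pos_eq a b c k m))) /\
     (* (b) *)
     (0 < c <= 1 -> 0 < k < kstar a -> unique_pos_eq a b c k m)) /\
  (* (3) *)
  (0 < m < mm1 a c k -> 0 < c < 1 -> 0 < k < kstar a -> unique_pos_eq a b c k m).
Proof.
  split; [intros; apply case_le; lra|].
  split; [|intros; apply case_le; lra].
  intros hm1.
  destruct (mono a c k m hk hm hm1) as [hr [dec [inc [g1 [g2 g3]]]]].
  set (r := x_v2 a c k m) in *.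
  assert (uniq_dec : forall x z, 0 <= x <= r -> 0 <= z <= r ->
            ucub a c k m x = 0 -> ucub a c k m z = 0 -> x = z).
  { intros x z hx hz ux uz. destruct (Rtotal_order x z) as [h|[h|h]]; auto.
    - pose proof (dec x z ltac:(lra) h ltac:(lra)). lra.
    - pose proof (dec z x ltac:(lra) h ltac:(lra)). lra. }
  assert (uniq_inc : forall x z, r <= x -> r <= z ->
            ucub a c k m x = 0 -> ucub a c k m z = 0 -> x = z).
  { intros x z hx hz ux uz. destruct (Rtotal_order x z) as [h|[h|h]]; auto.
    - pose proof (inc x z ltac:(lra) h). lra.
    - pose proof (inc z x ltac:(lra) h). lra. }
  assert (E : a * (1 + k) = 1 + a * (k - kstar a)) by (unfold kstar; field; lra).
  pose proof (u0 a c k m) as U0. pose proof (u1 a c k m) as U1.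
  split.
  - intros hc1 hD. split.
    + intros hur hm2. apply to_unique; auto. specialize (g1 hm2).
      exists r. repeat split; auto; try lra.
      intros x hx hux. destruct (Rle_or_lt x r).
      * apply uniq_dec; auto; lra.
      * apply uniq_inc; auto; lra.
    + intros hur. split; [|split; [|split]].
      * intros hm2 hks. specialize (g1 hm2). apply to_unique; auto.
        destruct (ivt_down a c k m 0 r) as [z [hz hzu]]; auto; try lra.
        exists z. repeat split; auto; try lra.
        intros x hx hux. destruct (Rle_or_lt x r).
        -- apply uniq_dec; auto; lra.
        -- exfalso. pose proof (inc x 1 ltac:(lra) ltac:(lra)).
           assert (0 <= a * (k - kstar a)) by (apply Rmult_le_pos; lra). nra.
      * intros hm2 hks. specialize (g1 hm2). apply to_two; auto.
        destruct (ivt_down a c k m 0 r) as [z1 [hz1 hzu1]]; auto; try lra.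
        destruct (ivt_up a c k m r 1) as [z2 [hz2 hzu2]]; auto; try lra.
        { rewrite U1. assert (a * (k - kstar a) < 0) by nra. nra. }
        exists z1, z2. repeat split; auto; try lra.
        intros x hx hux. destruct (Rle_or_lt x r).
        -- left. apply uniq_dec; auto; lra.
        -- right. apply uniq_inc; auto; lra.
      * intros hm2. specialize (g2 hm2). apply to_unique; auto.
        destruct (ivt_down a c k m 0 r) as [z [hz hzu]]; auto; try lra.
        exists z. repeat split; auto; try lra.
        intros x hx hux. apply uniq_dec; auto; lra.
      * intros hm2 hks. specialize (g3 (proj2 hm2)). apply to_unique; auto.
        destruct (ivt_down a c k m 0 1) as [z [hz hzu]]; auto; try lra.
        { rewrite U1. assert (0 < a * (k - kstar a)) by nra. nra. }
        exists z. repeat split; auto; try lra.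
        intros x hx hux. apply uniq_dec; auto; lra.
  - intros hc1 hks. apply to_unique; auto.
    assert (hu1 : 0 < ucub a c k m 1).
    { rewrite U1. assert (a * (k - kstar a) < 0) by nra. nra. }
    assert (hr1 : r < 1).
    { destruct (Rlt_or_le r 1) as [|h]; auto.
      pose proof (dec 0 1 ltac:(lra) ltac:(lra) h). lra. }
    pose proof (dec 0 r ltac:(lra) hr ltac:(lra)).
    destruct (ivt_up a c k m r 1) as [z [hz hzu]]; auto; try lra.
    exists z. repeat split; auto; try lra.
    intros x hx hux. destruct (Rle_or_lt x r) as [h|h].
    + exfalso. pose proof (dec 0 x ltac:(lra) ltac:(lra) h). lra.
    + apply uniq_inc; auto; lra.
Qed.
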